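(* Let $W$ be a complex vector space. Every $\mathcal{S}_{trig}$-local subset of $\mathcal{E}(W)$ is compatible, and every quasi $\mathcal{S}_{trig}$-local subset of $\mathcal{E}(W)$ is quasi compatible.
   Context: $\mathcal{E}(W)=\mathrm{Hom}(W,W((x)))$; $\mathbb{C}(x)$ the rational function field; $\iota_{x_2,x_1}$ expansion in $\mathbb{C}((x_2))((x_1))$. $U\subset\mathcal{E}(W)$ is $\mathcal{S}_{trig}$-local if for any $a(x),b(x)\in U$ there exist $u_i(x),v_i(x)\in U$, $q_i(x)\in\mathbb{C}(x)$ ($i=1,\dots,r$), $k\in\mathbb{N}$ with $(x_1-x_2)^ka(x_1)b(x_2)=(x_1-x_2)^k\sum_i\iota_{x_2,x_1}(q_i(x_1/x_2))u_i(x_2)v_i(x_1)$; quasi $\mathcal{S}_{trig}$-local if instead $p(x_1/x_2)a(x_1)b(x_2)=p(x_1/x_2)\sum_i\iota_{x_2,x_1}(q_i(x_1/x_2))u_i(x_2)v_i(x_1)$ for some nonzero polynomial $p$. A finite sequence $a_1,\dots,a_r$ in $\mathcal{E}(W)$ is compatible if $\prod_{i<j}(x_i-x_j)^ka_1(x_1)\cdots a_r(x_r)\in\mathrm{Hom}(W,W((x_1,\dots,x_r)))$ for some $k\in\mathbb{N}$, quasi compatible if $\prod_{i<j}p(x_i,x_j)a_1(x_1)\cdots a_r(x_r)\in\mathrm{Hom}(W,W((x_1,\dots,x_r)))$ for some nonzero $p\in\mathbb{C}[[x,y]]$; a subset is (quasi) compatible if all its finite sequences are. *)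

(* Defs.v *)
From HB Require Import structures.
From mathcomp Require Import all_boot all_order all_algebra.
From mathcomp Require Import complex.
From mathcomp Require Import Rstruct.

Set Implicit Arguments.
Unset Strict Implicit.
Unset Printing Implicit Defensive.

Import Order.TTheory GRing.Theory Num.Theory.
Local Open Scope ring_scope.

Definition Cc : fieldType := (Rdefinitions.R)[i].

Section VertexOperatorLocality.
Variable K : fieldType.
Variable W : lmodType K.

(* E(W) = Hom(W, W((x))) : a(x) = sum_n a_n x^n, with a_n : W -> W   *)
(* linear and, for each w, a_n w = 0 for n << 0.  [ecoef a n] is the *)
(* coefficient of x^n.                                               *)
Record EW := MkEW {
  ecoef :> int -> {linear W -> W};
  etrunc : forall w : W, exists N : int, forall n : int, n < N -> ecoef n w = 0
}.

(* [fsum_is F v] : the family F has finite support and its sum is v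
   (used to express products of formal series that are well defined
   because only finitely many terms contribute to each coefficient). *)
Definition fsum_is (I : eqType) (F : I -> W) (v : W) : Prop :=
  exists s : seq I, [/\ uniq s, (forall i, i \notin s -> F i = 0)
                      & \sum_(i <- s) F i = v].

(* Multivariable series with coefficients in W, indexed by exponent  *)
(* vectors n : 'I_r -> int (n i = exponent of x_(i+1)).               *)

(* coefficient of x_1^(n 0) ... x_r^(n (r-1)) in a_1(x_1)...a_r(x_r) w *)
Definition prodcoef r (a : 'I_r -> EW) (w : W) (n : 'I_r -> int) : W :=
  foldr (fun i acc => a i (n i) acc) w (enum 'I_r).

(* power series in two variables: p s t = coefficient of x^s y^t *)
Definition ps2 := nat -> nat -> K.

Definition ps2_nonzero (p : ps2) := exists s t, p s t != 0.

(* (x - y)^k as a power series *)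
Definition psXY (k : nat) : ps2 :=
  fun s t => if (s + t == k)%N then (-1) ^+ t * ('C(k, s))%:R else 0.

Definition shift2 r (n : 'I_r -> int) (i j : 'I_r) (s t : nat) : 'I_r -> int :=
  fun l => n l - (if l == i then s%:Z else 0) - (if l == j then t%:Z else 0).

(* d = p(x_i, x_j) c *)
Definition mul_pair r (p : ps2) (i j : 'I_r) (c d : ('I_r -> int) -> W) : Prop :=
  forall n, fsum_is (fun st : nat * nat => p st.1 st.2 *: c (shift2 n i j st.1 st.2))
                    (d n).

(* d = (prod_{(i,j) in l} p(x_i, x_j)) c *)
Fixpoint mul_pairs r (p : ps2) (l : seq ('I_r * 'I_r)) (c d : ('I_r -> int) -> W)
  : Prop :=
  match l with
  | [::] => forall n, d n = c n
  | ij :: l' => exists e, mul_pair p ij.1 ij.2 c e /\ mul_pairs p l' e d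
  end.

Definition pairs_lt r : seq ('I_r * 'I_r) :=
  [seq ij <- [seq (i, j) | i <- enum 'I_r, j <- enum 'I_r] | (nat_of_ord ij.1 < nat_of_ord ij.2)%N].

(* d lies in W((x_1,...,x_r)) = W[[x_1..x_r]][x_1^-1..x_r^-1] *)
Definition multi_laurent r (d : ('I_r -> int) -> W) : Prop :=
  exists N : int, forall n, (exists l, n l < N) -> d n = 0.

Definition compatible_seq r (a : 'I_r -> EW) : Prop :=
  exists k : nat, forall w : W, exists d,
    mul_pairs (psXY k) (pairs_lt r) (prodcoef a w) d /\ multi_laurent d.

Definition quasi_compatible_seq r (a : 'I_r -> EW) : Prop :=
  exists p : ps2, ps2_nonzero p /\ forall w : W, exists d,
    mul_pairs p (pairs_lt r) (prodcoef a w) d /\ multi_laurent d.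

Definition compatible (U : EW -> Prop) : Prop :=
  forall r (a : 'I_r -> EW), (forall i, U (a i)) -> compatible_seq a.

Definition quasi_compatible (U : EW -> Prop) : Prop :=
  forall r (a : 'I_r -> EW), (forall i, U (a i)) -> quasi_compatible_seq a.

(* Two-variable series: F m n = coefficient of x_1^m x_2^n.          *)

(* [laurent_exp q e] : e is the Laurent expansion at 0 of the rational
   function q(z), i.e. q(z) = sum_j e j z^j in K((z)). *)
Definition laurent_exp (q : {fraction {poly K}}) (e : int -> K) : Prop :=
  (exists J : int, forall j : int, j < J -> e j = 0) /\
  exists f g : {poly K}, [/\ g != 0, q = FracField.tofrac f / FracField.tofrac g &
    forall n : int, \sum_(i < size g) g`_i * e (n - i%:Z)
                    = (if n is Posz m then f`_m else 0)].

(* coefficients of a(x_1) b(x_2) w *)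
Definition ab12 (a b : EW) (w : W) : int -> int -> W :=
  fun m n => a m (b n w).

(* coefficients of u(x_2) v(x_1) w *)
Definition uv21 (u v : EW) (w : W) : int -> int -> W :=
  fun m n => u n (v m w).

(* G = iota_{x_2,x_1}(q(x_1/x_2)) F, where q(z) = sum_j e j z^j *)
Definition iota_mul (e : int -> K) (F G : int -> int -> W) : Prop :=
  forall m n, fsum_is (fun j : int => e j *: F (m - j) (n + j)) (G m n).

(* (x_1 - x_2)^k F *)
Definition mulX12 (k : nat) (F : int -> int -> W) : int -> int -> W :=
  fun m n => \sum_(s < k.+1)
     ((-1) ^+ (k - s) * ('C(k, s))%:R) *: F (m - s%:Z) (n - (k - s)%:Z).

(* p(x_1/x_2) F, p a polynomial *)
Definition mulP12 (p : {poly K}) (F : int -> int -> W) : int -> int -> W :=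
  fun m n => \sum_(s < size p) p`_s *: F (m - s%:Z) (n + s%:Z).

(* the right-hand side  sum_i iota_{x_2,x_1}(q_i(x_1/x_2)) u_i(x_2) v_i(x_1) w *)
Definition loc_rhs r (u v : 'I_r -> EW) (q : 'I_r -> {fraction {poly K}})
  (w : W) (G : int -> int -> W) : Prop :=
  exists H : 'I_r -> int -> int -> W,
    (forall i, exists e, laurent_exp (q i) e /\ iota_mul e (uv21 (u i) (v i) w) (H i))
    /\ forall m n, G m n = \sum_(i < r) H i m n.

Definition Strig_local (U : EW -> Prop) : Prop :=
  forall a b, U a -> U b ->
  exists r (u v : 'I_r -> EW) (q : 'I_r -> {fraction {poly K}}) (k : nat),
    (forall i, U (u i) /\ U (v i)) /\
    forall w : W, exists G, loc_rhs u v q w G /\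
      forall m n, mulX12 k (ab12 a b w) m n = mulX12 k G m n.

Definition quasi_Strig_local (U : EW -> Prop) : Prop :=
  forall a b, U a -> U b ->
  exists r (u v : 'I_r -> EW) (q : 'I_r -> {fraction {poly K}}) (p : {poly K}),
    [/\ p != 0, (forall i, U (u i) /\ U (v i)) &
    forall w : W, exists G, loc_rhs u v q w G /\
      forall m n, mulP12 p (ab12 a b w) m n = mulP12 p G m n].

End VertexOperatorLocality.

(* Main.v *)
Require Import Defs.
From HB Require Import structures.
From mathcomp Require Import all_boot all_order all_algebra.
From mathcomp Require Import complex.
From mathcomp Require Import zify ring lra.
From Stdlib Require Import FunctionalExtensionality IndefiniteDescription.
Import Order.TTheory GRing.Theory Num.Theory.
Set Implicit Arguments.
Unset Strict Implicit.
Unset Printing Implicit Defensive.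
Open Scope ring_scope.

Lemma choice_fun (A B : Type) (P : A -> B -> Prop) :
  (forall a, exists b, P a b) -> exists f : A -> B, forall a, P a (f a).
Proof.
move=> H; exists (fun a => proj1_sig (constructive_indefinite_description _ (H a))).
by move=> a; case: (constructive_indefinite_description _ (H a)).
Qed.

Section Fsum.
Variable K : fieldType.
Variable V : lmodType K.

Lemma fsum_undup (I : eqType) (F : I -> V) (s : seq I) :
  (forall i, i \notin s -> F i = 0) -> fsum_is F (\sum_(i <- undup s) F i).
Proof.
move=> H; exists (undup s); split => //; first exact: undup_uniq.
by move=> i; rewrite mem_undup; exact: H.
Qed.

Lemma fsum_val (I : eqType) (F : I -> V) v (s : seq I) :
  fsum_is F v -> (forall i, i \notin s -> F i = 0) -> v = \sum_(i <- undup s) F i.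
Proof.
case=> s0 [u0 H0 <-] Hs.
rewrite (bigID (fun i => i \in s)) /=.
rewrite [X in _ + X]big1; last by move=> i /Hs.
rewrite addr0 [RHS](bigID (fun i => i \in s0)) /=.
rewrite [X in _ + X]big1; last by move=> i /H0.
rewrite addr0 -[LHS]big_filter -[RHS]big_filter; apply: perm_big; apply: uniq_perm; rewrite ?filter_uniq ?undup_uniq //.
by move=> i; rewrite !mem_filter mem_undup andbC.
Qed.

Lemma fsum_zero (I : eqType) (F : I -> V) v :
  fsum_is F v -> (forall i, F i = 0) -> v = 0.
Proof. by case=> s [_ _ <-] H; rewrite big1. Qed.

Lemma fsum_ext (I : eqType) (F G : I -> V) v :
  (forall i, F i = G i) -> fsum_is F v -> fsum_is G v.
Proof. by move=> H; have -> : F = G by apply: functional_extensionality. Qed.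

Lemma fsum_add (I : eqType) (F G : I -> V) v u :
  fsum_is F v -> fsum_is G u -> fsum_is (fun i => F i + G i) (v + u).
Proof.
move=> HF HG; have [s1 [_ H1 _]] := HF; have [s2 [_ H2 _]] := HG.
have HF' : forall i, i \notin s1 ++ s2 -> F i = 0.
  by move=> i; rewrite mem_cat negb_or => /andP[/H1].
have HG' : forall i, i \notin s1 ++ s2 -> G i = 0.
  by move=> i; rewrite mem_cat negb_or => /andP[_ /H2].
rewrite (fsum_val HF HF') (fsum_val HG HG') -big_split /=.
by apply: fsum_undup => i Hi; rewrite HF' ?HG' ?addr0.
Qed.

Lemma fsum0 (I : eqType) : fsum_is (fun _ : I => (0 : V)) 0.
Proof. by exists [::]; split; rewrite ?big_nil. Qed.

Lemma fsum_sum (I J : eqType) (r : seq J) (F : J -> I -> V) (v : J -> V) :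
  (forall k, fsum_is (F k) (v k)) ->
  fsum_is (fun i => \sum_(k <- r) F k i) (\sum_(k <- r) v k).
Proof.
move=> H; elim: r => [|k r IH].
  by rewrite big_nil; apply: fsum_ext (fsum0 I) => i; rewrite big_nil.
rewrite big_cons; apply: fsum_ext (fsum_add (H k) IH) => i; by rewrite big_cons.
Qed.

Lemma fsum_scale (I : eqType) (F : I -> V) v c :
  fsum_is F v -> fsum_is (fun i => c *: F i) (c *: v).
Proof.
case=> s [u H <-]; exists s; split => //; last by rewrite scaler_sumr.
by move=> i /H ->; rewrite scaler0.
Qed.

Lemma fsum_lin (I : eqType) (F : I -> V) v (L : {linear V -> V}) :
  fsum_is F v -> fsum_is (fun i => L (F i)) (L v).
Proof.
case=> s [u H <-]; exists s; split => //; last by rewrite linear_sum.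
by move=> i /H ->; rewrite linear0.
Qed.

Definition gop (X : Type) (sh : nat -> nat -> X -> X) (d : nat) (P : {poly K})
  (F : X -> V) : X -> V :=
  fun x => \sum_(s < d.+1) P`_s *: F (sh s (d - s)%N x).

Variable X : Type.
Variable sh : nat -> nat -> X -> X.
Hypothesis shA : forall s t s' t' x, sh s t (sh s' t' x) = sh (s + s') (t + t') x.
Hypothesis sh0 : forall x, sh 0 0 x = x.

Lemma gop_sumP (n : nat) (c : 'I_n -> K) (Q : 'I_n -> {poly K}) d F x :
  gop sh d (\sum_(i < n) c i *: Q i) F x = \sum_(i < n) c i *: gop sh d (Q i) F x.
Proof.
rewrite /gop; under eq_bigr => s _ do rewrite coef_sum scaler_suml.
rewrite exchange_big /=; apply: eq_bigr => i _; rewrite scaler_sumr.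
by apply: eq_bigr => s _; rewrite coefZ scalerA.
Qed.

Lemma gop_Xn d e i (P : {poly K}) F x : (i <= e)%N -> (size P <= d.+1)%N ->
  gop sh (d + e) (P * 'X^i) F x = gop sh d P F (sh i (e - i) x).
Proof.
move=> Hi HP; rewrite /gop.
rewrite -(big_mkord xpredT (fun s => (P * 'X^i)`_s *: F (sh s (d + e - s) x))).
rewrite (big_cat_nat (n := i)) //=; last by lia.
rewrite big1_seq ?add0r; last first.
  by move=> s /andP[_]; rewrite mem_index_iota => /andP[_ Hs]; rewrite coefMXn Hs scale0r.
rewrite -{1}(add0n i) big_addn.
rewrite (big_cat_nat (n := d.+1)) //=; last by lia.
rewrite [X in _ + X]big1_seq ?addr0; last first.
  move=> s /andP[_]; rewrite mem_index_iota => /andP[Hs _]; rewrite coefMXn.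
  rewrite ifF; last by apply/negbTE; rewrite -leqNgt; lia.
  by rewrite addnK (leq_sizeP _ _ HP) ?scale0r.
rewrite big_mkord; apply: eq_bigr => s _.
have := ltn_ord s; move: (nat_of_ord s) => s' Hs'.
rewrite coefMXn ifF; last by apply/negbTE; rewrite -leqNgt leq_addl.
rewrite addnK shA; congr (_ *: F (sh _ _ x)); lia.
Qed.

Lemma poly_trunc (Q : {poly K}) n : (size Q <= n)%N -> Q = \sum_(i < n) Q`_i *: 'X^i.
Proof.
move=> HQ; rewrite -poly_def; apply/polyP => j; rewrite coef_poly.
by case: ltnP => // Hj; rewrite (leq_sizeP _ _ HQ).
Qed.

Lemma gop_mul d1 d2 (P Q : {poly K}) F x :
  (size P <= d1.+1)%N -> (size Q <= d2.+1)%N ->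
  gop sh (d1 + d2) (P * Q) F x = gop sh d2 Q (gop sh d1 P F) x.
Proof.
move=> HP HQ; rewrite {1}(poly_trunc HQ) mulr_sumr.
under eq_bigr => i _ do rewrite -scalerAr.
rewrite gop_sumP /gop; apply: eq_bigr => i _; congr (_ *: _).
by rewrite -/(gop sh (d1 + d2) _ F x) gop_Xn //; rewrite -ltnS.
Qed.

Lemma gop_sumF (J : Type) (r : seq J) (G : J -> X -> V) d P x :
  gop sh d P (fun y => \sum_(k <- r) G k y) x = \sum_(k <- r) gop sh d P (G k) x.
Proof.
rewrite /gop; under eq_bigr => s _ do rewrite scaler_sumr.
by rewrite exchange_big.
Qed.

Lemma gop_subF (G1 G2 : X -> V) d P x :
  gop sh d P (fun y => G1 y - G2 y) x = gop sh d P G1 x - gop sh d P G2 x.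
Proof.
by rewrite /gop -sumrB; apply: eq_bigr => s _; rewrite scalerBr.
Qed.

End Fsum.

Section Fam.
Variable K : fieldType.
Variable W : lmodType K.

Definition fam r := ('I_r -> int) -> W.

Definition opp r (i j : 'I_r) d (P : {poly K}) (F : fam r) : fam r :=
  gop (fun s t n => shift2 n i j s t) d P F.

Lemma shift2A r (i j : 'I_r) s t s' t' n :
  shift2 (shift2 n i j s' t') i j s t = shift2 n i j (s + s') (t + t').
Proof.
apply: functional_extensionality => l; rewrite /shift2.
by case: (l == i); case: (l == j); rewrite ?PoszD; lia.
Qed.

Lemma shift20 r (i j : 'I_r) n : shift2 n i j 0 0 = n.
Proof.
apply: functional_extensionality => l; rewrite /shift2.
by case: (l == i); case: (l == j); lia.
Qed.

Lemma shift2C r (i j a b : 'I_r) s t s' t' n :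
  shift2 (shift2 n a b s' t') i j s t = shift2 (shift2 n i j s t) a b s' t'.
Proof.
apply: functional_extensionality => l; rewrite /shift2.
by case: (l == i); case: (l == j); case: (l == a); case: (l == b); lia.
Qed.

Lemma opp_mul r (i j : 'I_r) d1 d2 (P Q : {poly K}) (F : fam r) :
  (size P <= d1.+1)%N -> (size Q <= d2.+1)%N ->
  opp i j (d1 + d2) (P * Q) F = opp i j d2 Q (opp i j d1 P F).
Proof.
move=> HP HQ; apply: functional_extensionality => n.
rewrite /opp gop_mul //; try (intros; exact: shift2A); try (intros; exact: shift20).
Qed.

Lemma opp_comm r (i j a b : 'I_r) d d' (P P' : {poly K}) (F : fam r) :
  opp i j d P (opp a b d' P' F) = opp a b d' P' (opp i j d P F).
Proof.
apply: functional_extensionality => n; rewrite /opp /gop.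
under eq_bigr => s _ do rewrite scaler_sumr.
rewrite exchange_big /=; apply: eq_bigr => s' _; rewrite scaler_sumr.
apply: eq_bigr => s _; rewrite !scalerA mulrC shift2C //.
Qed.

Definition opL r (l : seq ('I_r * 'I_r)) d P (F : fam r) : fam r :=
  foldl (fun acc ij => opp ij.1 ij.2 d P acc) F l.

Lemma opL_cat r (l1 l2 : seq ('I_r * 'I_r)) d P F :
  opL (l1 ++ l2) d P F = opL l2 d P (opL l1 d P F).
Proof. by rewrite /opL foldl_cat. Qed.

Lemma opL_cons r ij (l : seq ('I_r * 'I_r)) d P F :
  opL (ij :: l) d P F = opL l d P (opp ij.1 ij.2 d P F).
Proof. by []. Qed.

Lemma opp_opL r (i j : 'I_r) l d P F :
  opp i j d P (opL l d P F) = opL l d P (opp i j d P F).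
Proof.
elim: l F => [|ab l IH] F //.
by rewrite !opL_cons IH opp_comm.
Qed.

Lemma opL_comm r (l1 l2 : seq ('I_r * 'I_r)) d P F :
  opL l1 d P (opL l2 d P F) = opL l2 d P (opL l1 d P F).
Proof.
elim: l1 F => [|ij l1 IH] F //.
by rewrite !opL_cons opp_opL IH.
Qed.

Lemma opp_sum r (i j : 'I_r) d P (J : Type) (s : seq J) (G : J -> fam r) :
  opp i j d P (fun n => \sum_(k <- s) G k n) = fun n => \sum_(k <- s) opp i j d P (G k) n.
Proof. by apply: functional_extensionality => n; rewrite /opp gop_sumF. Qed.

Lemma opL_sum r (l : seq ('I_r * 'I_r)) d P (J : Type) (s : seq J) (G : J -> fam r) :
  opL l d P (fun n => \sum_(k <- s) G k n) = fun n => \sum_(k <- s) opL l d P (G k) n.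
Proof.
elim: l G => [|ij l IH] G //.
by rewrite !opL_cons opp_sum IH.
Qed.

Definition bnd r (l : 'I_r) (N : int) (F : fam r) := forall n, n l < N -> F n = 0.

Lemma bnd_mono r (l : 'I_r) N N' F : N' <= N -> bnd l N F -> bnd l N' F.
Proof. by move=> HN H n Hn; apply: H; apply: lt_le_trans HN. Qed.

Lemma bnd_opp r (l i j : 'I_r) N d P F : bnd l N F -> bnd l N (opp i j d P F).
Proof.
move=> H n Hn; rewrite /opp /gop big1 // => s _; rewrite H ?scaler0 //.
apply: le_lt_trans Hn; rewrite /shift2.
by case: (l == i); case: (l == j); lia.
Qed.

Lemma bnd_opL r (l0 : 'I_r) N l d P F : bnd l0 N F -> bnd l0 N (opL l d P F).
Proof.
elim: l F => [|ij l IH] F H //.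
by rewrite opL_cons; apply: IH; apply: bnd_opp.
Qed.

Definition Aop r (k : 'I_r) (u : EW W) (F : fam r) : fam r := fun n => u (n k) (F n).

Lemma bnd_Aop r (l k : 'I_r) N u F : bnd l N F -> bnd l N (Aop k u F).
Proof. by move=> H n Hn; rewrite /Aop H ?linear0. Qed.

Lemma opp_Aop r (i j k : 'I_r) d P u F : i != k -> j != k ->
  opp i j d P (Aop k u F) = Aop k u (opp i j d P F).
Proof.
move=> Hi Hj; apply: functional_extensionality => n.
rewrite /opp /gop /Aop linear_sum; apply: eq_bigr => s _.
rewrite linearZ /=; congr (_ *: _); congr (u _ _).
by rewrite /shift2 eq_sym (negbTE Hi) eq_sym (negbTE Hj) !subr0.
Qed.

Lemma opL_Aop r (k : 'I_r) l d P u F :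
  all (fun ij => (ij.1 != k) && (ij.2 != k)) l ->
  opL l d P (Aop k u F) = Aop k u (opL l d P F).
Proof.
elim: l F => [|ij l IH] F // /andP[/andP[H1 H2] Hl].
by rewrite !opL_cons opp_Aop // IH.
Qed.

Definition liftfam r (k : 'I_r.+1) (F : fam r) : fam r.+1 :=
  fun n => F (fun j => n (lift k j)).

Definition liftp r (k : 'I_r.+1) (ij : 'I_r * 'I_r) := (lift k ij.1, lift k ij.2).

Lemma opp_lift r (k : 'I_r.+1) (i j : 'I_r) d P F :
  opp (lift k i) (lift k j) d P (liftfam k F) = liftfam k (opp i j d P F).
Proof.
apply: functional_extensionality => n; rewrite /opp /gop /liftfam.
apply: eq_bigr => s _; congr (_ *: F _).
by apply: functional_extensionality => l; rewrite /shift2 !(inj_eq lift_inj).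
Qed.

Lemma opL_lift r (k : 'I_r.+1) l d P F :
  opL (map (liftp k) l) d P (liftfam k F) = liftfam k (opL l d P F).
Proof.
elim: l F => [|ij l IH] F //.
by rewrite !opL_cons /= opp_lift IH.
Qed.

Lemma bnd_lift r (k : 'I_r.+1) (l : 'I_r) N F : bnd l N F -> bnd (lift k l) N (liftfam k F).
Proof. by move=> H n Hn; rewrite /liftfam H. Qed.

Definition hom d (P : {poly K}) : ps2 K := fun s t => if (s + t == d)%N then P`_s else 0.

Lemma mul_pair_opp r (i j : 'I_r) d P (c : fam r) :
  Defs.mul_pair (hom d P) i j c (opp i j d P c).
Proof.
move=> n; pose L := [seq (k, (d - k)%N) | k <- iota 0 d.+1].
have HL : uniq L by rewrite map_inj_uniq ?iota_uniq // => x y [].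
exists L; split => //.
  case=> s t /= Hst; rewrite /hom; case: eqP => [E|]; last by rewrite scale0r.
  exfalso; move/negP: Hst; apply; apply/mapP; exists s; last by congr pair; lia.
  by rewrite mem_iota; lia.
rewrite big_map /opp /gop -(big_mkord xpredT (fun s => P`_s *: c (shift2 n i j s (d - s)))).
rewrite /index_iota subn0; apply: eq_big_seq => s; rewrite mem_iota => Hs /=.
by rewrite /hom ifT //; apply/eqP; lia.
Qed.

Lemma mul_pairs_opL r l d P (c : fam r) : mul_pairs (hom d P) l c (opL l d P c).
Proof.
elim: l c => [|ij l IH] c //.
by exists (opp ij.1 ij.2 d P c); split; [exact: mul_pair_opp | exact: IH].
Qed.

Definition tau r (c0 c1 : 'I_r) (j : int) (n : 'I_r -> int) : 'I_r -> int :=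
  fun l => n l - (if l == c0 then j else 0) + (if l == c1 then j else 0).

Definition IsIota r (c0 c1 : 'I_r) (e : int -> K) (X Z : fam r) :=
  forall n, fsum_is (fun j : int => e j *: X (tau c0 c1 j n)) (Z n).

Lemma tau_shift2 r (c0 c1 i j : 'I_r) jj s t n :
  tau c0 c1 jj (shift2 n i j s t) = shift2 (tau c0 c1 jj n) i j s t.
Proof.
apply: functional_extensionality => l; rewrite /tau /shift2.
by case: (l == c0); case: (l == c1); case: (l == i); case: (l == j); lia.
Qed.

Lemma IsIota_opp r (c0 c1 i j : 'I_r) e d P X Z :
  IsIota c0 c1 e X Z -> IsIota c0 c1 e (opp i j d P X) (opp i j d P Z).
Proof.
move=> H n; rewrite /opp /gop.
have H2 : forall s : 'I_d.+1, fsum_is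
    (fun jj => P`_s *: (e jj *: X (tau c0 c1 jj (shift2 n i j s (d - s)))))
    (P`_s *: Z (shift2 n i j s (d - s))) by move=> s; apply: fsum_scale; apply: H.
have := fsum_sum (index_enum 'I_d.+1) H2.
apply: fsum_ext => jj; rewrite scaler_sumr; apply: eq_bigr => s _.
by rewrite !scalerA mulrC tau_shift2.
Qed.

Lemma IsIota_opL r (c0 c1 : 'I_r) e l d P X Z :
  IsIota c0 c1 e X Z -> IsIota c0 c1 e (opL l d P X) (opL l d P Z).
Proof.
elim: l X Z => [|ij l IH] X Z H //.
by rewrite !opL_cons; apply: IH; apply: IsIota_opp.
Qed.

Lemma IsIota_bnd r (c0 c1 : 'I_r) e X Z N J :
  c0 != c1 -> (forall j, j < J -> e j = 0) -> bnd c0 N X -> IsIota c0 c1 e X Z ->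
  bnd c0 (N + J) Z.
Proof.
move=> Hc He HX H n Hn; apply: (fsum_zero (H n)) => j.
case: (ltP j J) => Hj; first by rewrite He ?scale0r.
rewrite HX ?scaler0 // /tau eqxx (negbTE Hc).
lia.
Qed.

End Fam.

Section Laurent.
Variable K : fieldType.

Definition shI (s t : nat) (n : int) : int := n - s%:Z.

Lemma shIA s t s' t' x : shI s t (shI s' t' x) = shI (s + s') (t + t') x.
Proof. rewrite /shI PoszD; lia. Qed.
Lemma shI0 x : shI 0 0 x = x.
Proof. by rewrite /shI subr0. Qed.

Definition conv d (P : {poly K}) (E : int -> K^o) : int -> K^o := gop shI d P E.

Lemma convE d P E n : conv d P E n = \sum_(s < d.+1) P`_s * E (n - s%:Z).
Proof. by []. Qed.

Lemma conv_mul d1 d2 (P Q : {poly K}) E n :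
  (size P <= d1.+1)%N -> (size Q <= d2.+1)%N ->
  conv (d1 + d2) (P * Q) E n = conv d2 Q (conv d1 P E) n.
Proof. move=> HP HQ; rewrite /conv gop_mul //; try (intros; exact: shIA); try (intros; exact: shI0). Qed.

Definition Ff (f : {poly K}) (n : int) : K^o := if n is Posz m then f`_m else 0.
Definition delta (n : int) : K^o := if n == 0 then 1 else 0.

Lemma conv_delta d (f : {poly K}) n : (size f <= d.+1)%N -> conv d f delta n = Ff f n.
Proof.
move=> Hf; rewrite convE /Ff.
case: n => [m|m].
  case: (ltnP m d.+1) => Hm.
    rewrite (bigD1 (Ordinal Hm)) //= big1 ?addr0.
      by rewrite /delta subrr eqxx mulr1.
    move=> s Hs; rewrite /delta ifF ?mulr0 //; apply/negbTE.
    rewrite subr_eq0; apply/negP => /eqP [] E; move: Hs; rewrite -val_eqE /= E eqxx.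
    by [].
  rewrite big1; first by rewrite (leq_sizeP _ _ Hf).
  move=> s _; rewrite /delta ifF ?mulr0 //; apply/negbTE.
  rewrite subr_eq0; apply/negP => /eqP [] E.
  by have := ltn_ord s; rewrite -E ltnNge Hm.
rewrite big1 // => s _; rewrite /delta ifF ?mulr0 //; apply/negbTE.
rewrite subr_eq0; apply/negP => /eqP E.
by have : (Negz m < 0) by []; rewrite E.
Qed.

Lemma conv_zero (h : {poly K}) d (E : int -> K) J :
  h != 0 -> (size h <= d.+1)%N -> (forall j, j < J -> E j = 0) ->
  (forall n, conv d h E n = 0) -> forall j, E j = 0.
Proof.
move=> Hh Hs HJ H0 j; apply/eqP; apply/negPn/negP => Hj.
have exK : exists k : nat, E (J + k%:Z) != 0.
  case: (ltP j J) => HjJ; first by move: Hj; rewrite HJ ?eqxx.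
  exists `|j - J|%N; rewrite abszE ger0_norm ?subr_ge0 //.
  by have -> : J + (j - J) = j by lia.
have exI : exists i : nat, h`_i != 0.
  by exists (size h).-1; rewrite -/(lead_coef h) lead_coef_eq0.
case: (ex_minnP exK) => k0 Hk0 Hmink.
case: (ex_minnP exI) => i0 Hi0 Hmini.
have Hi0d : (i0 < d.+1)%N.
  apply: leq_trans Hs; rewrite ltnNge; apply/negP => /leq_sizeP/(_ i0 (leqnn _)) E0.
  by move: Hi0; rewrite E0 eqxx.
have := H0 (J + k0%:Z + i0%:Z); rewrite convE (bigD1 (Ordinal Hi0d)) //= big1.
  rewrite addr0 addrK => /eqP; rewrite mulf_eq0 (negbTE Hi0) /=.
  by apply/negP.
move=> [s Hsd] /=; rewrite -val_eqE /= => Hsi.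
case: (ltngtP s i0) => Hsi0; last by move: Hsi; rewrite Hsi0 eqxx.
  have : h`_s == 0 by apply/negPn/negP => /Hmini; rewrite leqNgt Hsi0.
  by move/eqP ->; rewrite mul0r.
case: (leqP s (k0 + i0)) => Hk.
  have -> : J + k0%:Z + i0%:Z - s%:Z = J + (k0 + i0 - s)%N%:Z.
    by rewrite -subzn // PoszD; lia.
  have : E (J + (k0 + i0 - s)%N%:Z) == 0.
    apply/negPn/negP => /Hmink; lia.
  by move/eqP ->; rewrite mulr0.
rewrite HJ ?mulr0 //; lia.
Qed.

Lemma div_eq (F : fieldType) (a b c e : F) :
  b != 0 -> e != 0 -> a / b = c / e -> a * e = c * b.
Proof.
move=> Hb He /(congr1 (fun x => x * b * e)) /=.
by rewrite divfK // mulrAC divfK.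
Qed.

Lemma sizeMD (P Q : {poly K}) d1 d2 :
  (size P <= d1.+1)%N -> (size Q <= d2.+1)%N -> (size (P * Q)%R <= (d1 + d2).+1)%N.
Proof.
move=> HP HQ; have := size_mul_leq P Q; lia.
Qed.

Lemma laurent_uniq (q : {fraction {poly K}}) e e' :
  laurent_exp q e -> laurent_exp q e' -> e = e'.
Proof.
move=> [[J HJ] [f [g [Hg Hq He]]]] [[J' HJ'] [f' [g' [Hg' Hq' He']]]].
have Hfg : f * g' = f' * g.
  apply/eqP; rewrite -tofrac_eq !tofracM; apply/eqP.
  apply: div_eq; rewrite ?tofrac_eq0 //.
  by rewrite -Hq -Hq'.
set dg := (size g).-1; set dg' := (size g').-1.
have Hsg : size g = dg.+1 by rewrite prednK ?size_poly_gt0.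
have Hsg' : size g' = dg'.+1 by rewrite prednK ?size_poly_gt0.
have Ce : conv dg g e = Ff f.
  apply: functional_extensionality => n; rewrite convE; have := He n.
  by rewrite Hsg.
have Ce' : conv dg' g' e' = Ff f'.
  apply: functional_extensionality => n; rewrite convE; have := He' n.
  by rewrite Hsg'.
set df := (size f).-1; set df' := (size f').-1.
have Hf : (size f <= df.+1)%N by rewrite /df; case: (size f).
have Hf' : (size f' <= df'.+1)%N by rewrite /df'; case: (size f').
have Dl : forall n, conv (dg + dg') (g * g') e n = Ff (f * g') n.
  move=> n; rewrite conv_mul ?Hsg ?Hsg' // Ce.
  have -> : Ff f = conv df f delta.
    by apply: functional_extensionality => m; rewrite conv_delta.
  by rewrite -conv_mul ?Hsg' // conv_delta // sizeMD ?Hsg'.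
have Dr : forall n, conv (dg + dg') (g * g') e' n = Ff (f * g') n.
  move=> n; rewrite addnC mulrC conv_mul ?Hsg ?Hsg' // Ce'.
  have -> : Ff f' = conv df' f' delta.
    by apply: functional_extensionality => m; rewrite conv_delta.
  by rewrite -conv_mul ?Hsg // conv_delta ?sizeMD ?Hsg // Hfg.
apply: functional_extensionality => j; apply/eqP; rewrite -subr_eq0; apply/eqP.
have Hh : g * g' != 0 by rewrite mulf_neq0.
have Hsh : (size (g * g')%R <= (dg + dg').+1)%N by rewrite sizeMD ?Hsg ?Hsg'.
have [J2 HJ2] : exists J2, forall j, j < J2 -> e j - e' j = 0.
  case: (leP J J') => HJJ.
    by exists J => jj Hj; rewrite HJ ?HJ' ?subrr //; apply: lt_le_trans HJJ.
  by exists J' => jj Hj; rewrite HJ ?HJ' ?subrr //; apply: lt_trans HJJ.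
apply: (conv_zero (E := fun j => e j - e' j) Hh Hsh HJ2) => n.
by rewrite /conv gop_subF -!/(conv _ _ _ _) Dl Dr subrr.
Qed.

End Laurent.

Lemma lbound_seq (s : seq int) : exists N0, forall x, x \in s -> N0 <= x.
Proof.
elim: s => [|x s [N0 HN0]]; first by exists 0.
exists (Num.min x N0) => y; rewrite inE => /orP[/eqP ->|Hy].
  by rewrite ge_min lexx.
by rewrite ge_min (HN0 _ Hy) orbT.
Qed.

Lemma lbound (I : finType) (N : I -> int) : exists N0, forall i, N0 <= N i.
Proof.
have [N0 H] := lbound_seq (map N (enum I)).
by exists N0 => i; apply: H; apply: map_f; rewrite mem_enum.
Qed.

Definition ltp r (ij : 'I_r * 'I_r) := (nat_of_ord ij.1 < nat_of_ord ij.2)%N.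

Lemma pairs_row r (s e : seq 'I_r) :
  [seq ij <- [seq (x, y) | x <- map (lift ord0) s, y <- ord0 :: map (lift ord0) e] | ltp ij]
  = map (liftp ord0) [seq ij <- [seq (x, y) | x <- s, y <- e] | ltp ij].
Proof.
elim: s => [|i s IH] //.
rewrite map_cons !allpairs_cons !filter_cat map_cat IH; congr (_ ++ _).
rewrite map_cons /= /ltp /=.
rewrite -map_comp !filter_map -map_comp.
by congr map; apply: eq_filter => j /=; rewrite !lift0 ltnS.
Qed.

Lemma pairs_lt_S r :
  pairs_lt r.+1 = [seq (ord0, lift ord0 j) | j <- enum 'I_r] ++ map (liftp ord0) (pairs_lt r).
Proof.
rewrite /pairs_lt enum_ordSl allpairs_cons filter_cat.
congr (_ ++ _).
  rewrite map_cons /= -map_comp filter_map (eq_filter (a2 := predT)) ?filter_predT //.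
exact: (pairs_row (enum 'I_r) (enum 'I_r)).
Qed.

Section Prod.
Variable K : fieldType.
Variable W : lmodType K.

Lemma prodcoef_S r (a : 'I_r.+1 -> EW W) w n :
  prodcoef a w n = a ord0 (n ord0) (prodcoef (fun j => a (lift ord0 j)) w (fun j => n (lift ord0 j))).
Proof. by rewrite /prodcoef enum_ordSl /= foldr_map. Qed.

Lemma prodcoef_0 (a : 'I_0 -> EW W) w n : prodcoef a w n = w.
Proof.
have E : enum 'I_0 = [::] by apply: size0nil; rewrite size_enum_ord.
by rewrite /prodcoef E.
Qed.
End Prod.

Definition A0 r' : seq ('I_r'.+2 * 'I_r'.+2) :=
  [seq (ord0, lift ord0 (lift ord0 j)) | j <- enum 'I_r'].
Definition A1 r' : seq ('I_r'.+2 * 'I_r'.+2) :=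
  [seq (lift ord0 ord0, lift ord0 (lift ord0 j)) | j <- enum 'I_r'].
Definition B2 r' : seq ('I_r'.+2 * 'I_r'.+2) :=
  map (liftp ord0) (map (liftp ord0) (pairs_lt r')).

Lemma pl2 r' : pairs_lt r'.+2 = (ord0, lift ord0 ord0) :: A0 r' ++ (A1 r' ++ B2 r').
Proof.
rewrite pairs_lt_S enum_ordSl map_cons -map_comp pairs_lt_S map_cat -map_comp.
by [].
Qed.

Lemma lift1_0 r' : lift (lift ord0 (ord0 : 'I_r'.+1)) (ord0 : 'I_r'.+1) = ord0.
Proof. by apply: val_inj. Qed.

Lemma lift1_lift0 r' (j : 'I_r') :
  lift (lift ord0 (ord0 : 'I_r'.+1)) (lift ord0 j) = lift ord0 (lift ord0 j).
Proof. by apply: val_inj; rewrite /= /bump /=. Qed.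

Lemma pl1 r' : map (liftp (lift ord0 ord0)) (pairs_lt r'.+1) = A0 r' ++ B2 r'.
Proof.
rewrite pairs_lt_S map_cat; congr (_ ++ _).
  rewrite /A0 -[LHS]map_comp; apply: eq_map => j.
  by rewrite /liftp /= lift1_0 lift1_lift0.
rewrite /B2 -[LHS]map_comp -[RHS]map_comp; apply: eq_map => -[x y].
by rewrite /liftp /= !lift1_lift0.
Qed.

Definition avoid r (k : 'I_r) (ij : 'I_r * 'I_r) := (ij.1 != k) && (ij.2 != k).

Lemma avoid_lift r (k : 'I_r.+1) l : all (avoid k) (map (liftp k) l).
Proof.
rewrite all_map; apply/allP => -[x y] _.
by rewrite /avoid /= !(eq_sym _ k) !neq_lift.
Qed.

Lemma avoid_o1 r' : all (avoid (lift ord0 ord0)) (A0 r' ++ B2 r').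
Proof. by rewrite -pl1 avoid_lift. Qed.

Section Core.
Variable K : fieldType.
Variable W : lmodType K.

Definition op2 d (P : {poly K}) (F : int -> int -> W) (x y : int) : W :=
  \sum_(s < d.+1) P`_s *: F (x - s%:Z) (y - (d - s)%:Z).

Lemma bnd_sum r (l : 'I_r) N (J : Type) (s : seq J) (F : J -> fam W r) :
  (forall k, bnd l N (F k)) -> bnd l N (fun n => \sum_(k <- s) F k n).
Proof. by move=> H n Hn; rewrite big1 // => k _; rewrite H. Qed.

Lemma bnd_all r (F : fam W r) :
  (forall l, exists N, bnd l N F) -> exists N, forall l, bnd l N F.
Proof.
move=> H; have [f Hf] := choice_fun H; have [N0 HN0] := lbound f.
by exists N0 => l; apply: bnd_mono (HN0 l) (Hf l).
Qed.

Variable U : EW W -> Prop.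
Variable M : {poly K} -> nat -> Prop.
Hypothesis M1 : M 1 0.
Hypothesis MM : forall P d Q e, M P d -> M Q e -> M (P * Q) (d + e).
Hypothesis Msz : forall P d, M P d -> (size P <= d.+1)%N.
Hypothesis HL : forall a b, U a -> U b ->
  exists m (u v : 'I_m -> EW W) (q : 'I_m -> {fraction {poly K}}) P d,
   [/\ M P d, (forall i, U (u i) /\ U (v i)) &
    forall w, exists G, loc_rhs u v q w G /\
      forall x y, op2 d P (ab12 a b w) x y = op2 d P G x y].

Definition good r (a : 'I_r -> EW W) (P0 : {poly K}) (d0 : nat) :=
  M P0 d0 /\ forall (Q : {poly K}) d1, (size Q <= d1.+1)%N -> forall w : W, exists N, forall l : 'I_r,
    bnd l N (opL (pairs_lt r) (d0 + d1) (P0 * Q) (prodcoef a w)).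

Lemma Mprod m (Pf : 'I_m -> {poly K}) (df : 'I_m -> nat) :
  (forall i, M (Pf i) (df i)) -> M (\prod_(i < m) Pf i) (\sum_(i < m) df i).
Proof. by move=> H; elim/big_ind2: _ => // *; apply: MM. Qed.

Theorem core r (a : 'I_r -> EW W) : (forall i, U (a i)) -> exists P0 d0, good a P0 d0.
Proof.
elim: r a => [|r IH] a Ua.
  exists 1, 0%N; split => // Q d1 HQ w; exists 0 => l; by case: l.
case: r IH a Ua => [|r'] IH a Ua.
  exists 1, 0%N; split => // Q d1 HQ w.
  have [N HN] := etrunc (a ord0) w.
  exists N => l; apply: bnd_opL => n Hn.
  rewrite prodcoef_S prodcoef_0 HN //.
  by move: Hn; rewrite (ord1 l).
set o1 : 'I_r'.+2 := lift ord0 ord0.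
have [Ps [ds [Ms Hs]]] := IH (fun j => a (lift ord0 j)) (fun j => Ua _).
have [m [u [v [q [Pl [dl [Ml Huv Hloc]]]]]]] := HL (Ua ord0) (Ua o1).
pose b (i : 'I_m) : 'I_r'.+1 -> EW W := fun j => if j == ord0 then v i else a (lift o1 j).
have Ub : forall i j, U (b i j).
  by move=> i j; rewrite /b; case: (j == ord0); [exact: (Huv i).2 | exact: Ua].
have Hb : forall i, exists pd : {poly K} * nat, good (b i) pd.1 pd.2.
  by move=> i; have [P0 [d0 H]] := IH (b i) (Ub i); exists (P0, d0).
have [f Hf] := choice_fun Hb.
have [Gf HG] := choice_fun Hloc.
have HH : forall w, exists Hh : 'I_m -> int -> int -> W,
    (forall i, exists e, laurent_exp (q i) e /\ iota_mul e (uv21 (u i) (v i) w) (Hh i))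
    /\ forall x y, Gf w x y = \sum_(i < m) Hh i x y.
  by move=> w; have [[Hh HHh] _] := HG w; exists Hh.
have [Hf' HHf] := choice_fun HH.
have He0 : forall i, exists e, laurent_exp (q i) e.
  by move=> i; have [e [He _]] := (HHf 0).1 i; exists e.
have [e0 He0'] := choice_fun He0.
have Hiota : forall w i, iota_mul (e0 i) (uv21 (u i) (v i) w) (Hf' w i).
  by move=> w i; have [e [He Hi]] := (HHf w).1 i; rewrite (laurent_uniq (He0' i) He).
have HJ : forall i, exists J, forall j, j < J -> e0 i j = 0.
  by move=> i; have [[J HJ] _] := He0' i; exists J.
have [Jf HJf] := choice_fun HJ.
have [J0 HJ0] := lbound Jf.
pose Pb := \prod_(i < m) (f i).1.
pose db := (\sum_(i < m) (f i).2)%N.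
have Mb : M Pb db by apply: Mprod => i; exact: (Hf i).1.
exists (Ps * (Pl * Pb)), (ds + (dl + db))%N; split; first by apply: MM => //; apply: MM.
move=> Q d1 HQ w.
apply: bnd_all => l.
set c := prodcoef a w.
have Ec : c = Aop ord0 (a ord0) (liftfam ord0 (prodcoef (fun j => a (lift ord0 j)) w)).
  by apply: functional_extensionality => n; rewrite /c prodcoef_S.
case: (unliftP ord0 l) => [l'|] ->.
  have HQ' : (size ((Pl * Pb) * Q)%R <= ((dl + db) + d1).+1)%N.
    by apply: sizeMD => //; apply: Msz; apply: MM.
  have [N1 HN1] := Hs _ _ HQ' w.
  exists N1.
  rewrite -addnA -mulrA pairs_lt_S opL_cat opL_comm Ec opL_Aop; last exact: avoid_lift.
  rewrite opL_lift.
  apply: bnd_opL; apply: bnd_Aop; apply: bnd_lift; exact: HN1.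
pose Y (n : 'I_r'.+2 -> int) :=
  prodcoef (fun j => a (lift ord0 (lift ord0 j))) w (fun j => n (lift ord0 (lift ord0 j))).
have Ec2 : forall n, c n = a ord0 (n ord0) (a o1 (n o1) (Y n)).
  by move=> n; rewrite /c prodcoef_S prodcoef_S.
pose c' := fun n => Gf (Y n) (n ord0) (n o1).
have Hn0 : forall j : 'I_r', (lift ord0 (lift ord0 j) == ord0) = false.
  by move=> j; apply/negbTE; rewrite eq_sym neq_lift.
have Hn1 : forall j : 'I_r', (lift ord0 (lift ord0 j) == o1) = false.
  by move=> j; apply/negbTE; rewrite /o1 (inj_eq lift_inj) eq_sym neq_lift.
have H01 : (ord0 == o1) = false by apply/negbTE; rewrite /o1 neq_lift.
have H10 : (o1 == ord0) = false by rewrite eq_sym.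
have Ysh : forall n s t, Y (shift2 n ord0 o1 s t) = Y n.
  move=> n s t; rewrite /Y; congr prodcoef; apply: functional_extensionality => j.
  by rewrite /shift2 Hn0 Hn1 !subr0.
have Step1 : opp ord0 o1 dl Pl c = opp ord0 o1 dl Pl c'.
  apply: functional_extensionality => n; rewrite /opp /gop.
  have := (HG (Y n)).2 (n ord0) (n o1); rewrite /op2 => E.
  transitivity (\sum_(s < dl.+1) Pl`_s *:
     ab12 (a ord0) (a o1) (Y n) (n ord0 - s%:Z) (n o1 - (dl - s)%:Z)).
    apply: eq_bigr => s _; rewrite Ec2 Ysh /ab12 /shift2 eqxx H01 H10 eqxx.
    by rewrite !subr0.
  rewrite E; apply: eq_bigr => s _; rewrite /c' Ysh /shift2 eqxx H01 H10 eqxx.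
  by rewrite !subr0.
have ED : (ds + (dl + db) + d1 = dl + (ds + db + d1))%N by lia.
have EP : Ps * (Pl * Pb) * Q = Pl * (Ps * Pb * Q).
  by rewrite mulrCA !mulrA.
have HR : (size (Ps * Pb * Q)%R <= (ds + db + d1).+1)%N.
  by apply: sizeMD => //; apply: sizeMD; apply: Msz.
have Step2 : opp ord0 o1 (dl + (ds + db + d1)) (Pl * (Ps * Pb * Q)) c =
             opp ord0 o1 (dl + (ds + db + d1)) (Pl * (Ps * Pb * Q)) c'.
  by rewrite (opp_mul ord0 o1 c (Msz Ml) HR) (opp_mul ord0 o1 c' (Msz Ml) HR) Step1.
rewrite ED EP pl2 opL_cons /= Step2.
set D := (dl + (ds + db + d1))%N; set PP := Pl * (Ps * Pb * Q).
have -> : opL (A0 r' ++ (A1 r' ++ B2 r')) D PP (opp ord0 o1 D PP c') =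
          opL (A1 r') D PP (opp ord0 o1 D PP (opL (A0 r' ++ B2 r') D PP c')).
  by rewrite !opL_cat !opp_opL opL_comm.
suff [N0 HN0] : exists N0, bnd ord0 N0 (opL (A0 r' ++ B2 r') D PP c').
  by exists N0; apply: bnd_opL; apply: bnd_opp.
pose ci (i : 'I_m) := fun n : 'I_r'.+2 -> int => Hf' (Y n) i (n ord0) (n o1).
have Ec' : c' = fun n => \sum_(i < m) ci i n.
  by apply: functional_extensionality => n; rewrite /c' (HHf (Y n)).2.
rewrite Ec' opL_sum.
suff HNi : forall i, exists N, bnd ord0 N (opL (A0 r' ++ B2 r') D PP (ci i)).
  have [Nf HNf] := choice_fun HNi; have [N0 HN0] := lbound Nf.
  by exists N0; apply: bnd_sum => i; apply: bnd_mono (HN0 i) (HNf i).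
move=> i.
pose V := liftfam o1 (prodcoef (b i) w).
have HI : IsIota ord0 o1 (e0 i) (Aop o1 (u i) V) (ci i).
  move=> n; have := Hiota (Y n) i (n ord0) (n o1); apply: fsum_ext => j.
  rewrite /Aop /V /liftfam prodcoef_S /uv21.
  have -> : b i ord0 = v i by rewrite /b eqxx.
  have -> : lift o1 ord0 = ord0 by exact: lift1_0.
  congr (_ *: u i _ (v i _ _)).
  - by rewrite /tau H10 eqxx; lia.
  - by rewrite /tau H01 eqxx; lia.
  rewrite /Y; congr prodcoef; apply: functional_extensionality => k.
    rewrite /b; case: eqP => E; first by move: (neq_lift ord0 k); rewrite E eqxx.
    by rewrite lift1_lift0.
  by rewrite lift1_lift0 /tau Hn0 Hn1; lia.
have HI' := IsIota_opL (A0 r' ++ B2 r') D PP HI.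
rewrite (opL_Aop _ _ _ _ (avoid_o1 r')) /V -pl1 opL_lift in HI'.
pose Pb' := \prod_(j < m | j != i) (f j).1.
pose db' := (\sum_(j < m | j != i) (f j).2)%N.
have Mb' : M Pb' db'.
  by rewrite /Pb' /db'; elim/big_ind2: _ => // *; [apply: MM | exact: (Hf _).1].
have EPb : Pb = (f i).1 * Pb' by rewrite /Pb (bigD1 i).
have Edb : db = ((f i).2 + db')%N by rewrite /db (bigD1 i).
pose Qi := Pl * (Ps * Pb' * Q).
pose di := (dl + (ds + db' + d1))%N.
have HQi : (size Qi <= di.+1)%N.
  apply: sizeMD; first exact: Msz.
  by apply: sizeMD => //; apply: sizeMD; apply: Msz.
have [Ni HNi] := (Hf i).2 Qi di HQi w.
have EDi : D = ((f i).2 + di)%N by rewrite /D /di Edb; lia.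
have EPi : PP = (f i).1 * Qi.
  by rewrite /PP /Qi EPb; ring.
exists (Ni + J0).
rewrite pl1 in HI'.
apply: (@IsIota_bnd _ _ _ _ _ _ _ _ Ni J0 _ _ _ HI').
- by rewrite H01.
- by move=> j Hj; apply: HJf; apply: lt_le_trans Hj (HJ0 i).
apply: bnd_Aop; have := bnd_lift (k := o1) (HNi ord0).
by rewrite lift1_0 EDi EPi.
Qed.

End Core.

Section Final.
Variable K : fieldType.
Variable W : lmodType K.

Lemma coefXsub1 k s : (s <= k)%N ->
  (('X - 1) ^+ k : {poly K})`_s = (-1) ^+ (k - s) * ('C(k, s))%:R.
Proof.
move=> Hs; have -> : ('X - 1 : {poly K}) = -1 + 'X by rewrite addrC.
have E m : ((-1) ^+ m : {poly K}) = ((-1) ^+ m)%:P by rewrite rmorphXn /= polyCN polyC1.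
rewrite exprDn coef_sum (bigD1 (Ordinal (leq_ltn_trans Hs (ltnSn k)))) //= big1.
  by rewrite addr0 coefMn E coefCM coefXn eqxx mulr1 mulr_natr.
move=> i Hi; rewrite coefMn E coefCM coefXn.
have -> : (s == i) = false.
  by apply/negbTE; move: Hi; rewrite -val_eqE /= eq_sym.
by rewrite mulr0 mul0rn.
Qed.


Lemma compat_part (U : EW W -> Prop) : Strig_local U -> compatible U.
Proof.
move=> HS r a Ua.
pose M := fun (P : {poly K}) (d : nat) => P = ('X - 1) ^+ d.
have M1 : M 1 0%N by rewrite /M expr0.
have MM : forall P d Q e, M P d -> M Q e -> M (P * Q) (d + e)%N.
  by move=> P d Q e -> ->; rewrite /M exprD.
have Msz : forall P d, M P d -> (size P <= d.+1)%N.
  by move=> P d ->; rewrite -polyC1 size_exp_XsubC.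
have HL : forall a b, U a -> U b ->
  exists m (u v : 'I_m -> EW W) (q : 'I_m -> {fraction {poly K}}) P d,
   [/\ M P d, (forall i, U (u i) /\ U (v i)) &
    forall w, exists G, loc_rhs u v q w G /\
      forall x y, op2 d P (ab12 a b w) x y = op2 d P G x y].
  move=> a' b' Ha Hb; have [m [u [v [q [k [Huv Hw]]]]]] := HS a' b' Ha Hb.
  exists m, u, v, q, (('X - 1) ^+ k), k; split => //.
  move=> w; have [G [HG E]] := Hw w; exists G; split => // x y.
  have Hop : forall F : int -> int -> W, op2 k (('X - 1) ^+ k) F x y = mulX12 k F x y.
    move=> F; rewrite /op2 /mulX12; apply: eq_bigr => s _.
    by rewrite coefXsub1 // -ltnS.
  by rewrite !Hop E.
have [P0 [d0 [HM Hg]]] := @core K W U M M1 MM Msz HL r a Ua.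
exists d0 => w.
have [N HN] := Hg 1 0%N (eq_leq (@size_poly1 K)) w.
rewrite addn0 mulr1 in HN.
exists (opL (pairs_lt r) d0 P0 (prodcoef a w)); split.
  have -> : psXY K d0 = hom d0 P0.
    apply: functional_extensionality => s; apply: functional_extensionality => t.
    rewrite /psXY /hom HM; case: eqP => // Est.
    rewrite coefXsub1; last by lia.
    by have -> : (d0 - s)%N = t by lia.
  exact: mul_pairs_opL.
by exists N => n [l Hl]; exact: HN l n Hl.
Qed.

Lemma quasi_part (U : EW W -> Prop) : quasi_Strig_local U -> quasi_compatible U.
Proof.
move=> HS r a Ua.
pose M := fun (P : {poly K}) (d : nat) => P != 0 /\ (size P <= d.+1)%N.
have M1 : M 1 0%N by rewrite /M oner_neq0 size_poly1.
have MM : forall P d Q e, M P d -> M Q e -> M (P * Q) (d + e)%N.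
  by move=> P d Q e [HP sP] [HQ sQ]; split; [rewrite mulf_neq0 | apply: sizeMD].
have Msz : forall P d, M P d -> (size P <= d.+1)%N by move=> P d [].
have HL : forall a b, U a -> U b ->
  exists m (u v : 'I_m -> EW W) (q : 'I_m -> {fraction {poly K}}) P d,
   [/\ M P d, (forall i, U (u i) /\ U (v i)) &
    forall w, exists G, loc_rhs u v q w G /\
      forall x y, op2 d P (ab12 a b w) x y = op2 d P G x y].
  move=> a' b' Ha Hb; have [m [u [v [q [p [Hp Huv Hw]]]]]] := HS a' b' Ha Hb.
  have Hsp : size p = (size p).-1.+1 by rewrite prednK ?size_poly_gt0.
  exists m, u, v, q, p, (size p).-1; split => //.
    by split => //; rewrite -Hsp.
  move=> w; have [G [HG E]] := Hw w; exists G; split => // x y.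
  have Hop : forall F : int -> int -> W, op2 (size p).-1 p F x y = mulP12 p F x (y - ((size p).-1)%:Z).
    move=> F; rewrite /op2 /mulP12.
    move: (size p).-1 Hsp => d ->.
    apply: eq_bigr => s _; congr (_ *: F _ _); have := ltn_ord s.
    move: (nat_of_ord s) => s' Hs'; rewrite -subzn; lia.
  by rewrite !Hop E.
have [P0 [d0 [[HP0 HsP0] Hg]]] := @core K W U M M1 MM Msz HL r a Ua.
exists (hom d0 P0); split.
  exists (size P0).-1, (d0 - (size P0).-1)%N; rewrite /hom ifT.
    by rewrite -/(lead_coef P0) lead_coef_eq0.
  by apply/eqP; lia.
move=> w; have [N HN] := Hg 1 0%N (eq_leq (@size_poly1 K)) w.
rewrite addn0 mulr1 in HN.
exists (opL (pairs_lt r) d0 P0 (prodcoef a w)); split; first exact: mul_pairs_opL.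
by exists N => n [l Hl]; exact: HN l n Hl.
Qed.

End Final.

Theorem lemma5p2 (W : lmodType Cc) (U : EW W -> Prop) :
  (Strig_local U -> compatible U) /\ (quasi_Strig_local U -> quasi_compatible U).
Proof. by split; [exact: compat_part | exact: quasi_part]. Qed.
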